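(* Let $\alpha,\beta,\gamma_1,\gamma_2,x$ be real numbers, $\lambda_1,\lambda_2$ nonnegative integers and $n$ a nonnegative integer. Then $$\sum_{k=0}^{n}\binom{n}{k}A_{k}^{\lambda_{1},x}(\alpha,\beta,\alpha+\beta+\gamma_{1})\,A_{n-k}^{\lambda_{2},x}(\alpha,\beta,\gamma_{2})=A_{n}^{\lambda_{1}+\lambda_{2},x}(\alpha,\beta,\alpha+\beta+\gamma_{1}+\gamma_{2}).$$
   Context: For a number $t$ and $\alpha$, the generalised factorial is $(t|\alpha)_n=\prod_{j=0}^{n-1}(t-j\alpha)$ for $n\ge 1$ and $(t|\alpha)_0=1$. For parameters $\alpha,\beta,\gamma$, the generalised Stirling numbers $S(n,k,\alpha,\beta,\gamma)$ ($0\le k\le n$) are defined by the polynomial identity $(t|\alpha)_n=\sum_{k=0}^{n}S(n,k,\alpha,\beta,\gamma)\,(t-\gamma|\beta)_k$ in the variable $t$. For a nonnegative integer $\lambda$ put $\binom{k+\lambda-1}{k}=\lambda(\lambda+1)\cdots(\lambda+k-1)/k!$ (equal to $1$ for $k=0$). Define $$A^{\lambda,x}_n(\alpha,\beta,\gamma)=\sum_{k=0}^{n}\binom{k+\lambda-1}{k}(-1)^{n+k}\beta^k k!\,S(n,k,\alpha,-\beta,-\gamma)\,x^k .$$ *)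

(* Defs.v *)
From HB Require Import structures.
From mathcomp Require Import all_boot all_order all_algebra.
From mathcomp Require Import reals.
From Stdlib Require Import ClassicalEpsilon.
Set Implicit Arguments. Unset Strict Implicit. Unset Printing Implicit Defensive.
Import Order.TTheory GRing.Theory Num.Theory.
Local Open Scope ring_scope.

Definition gfpoly (R : realType) (c b : R) (k : nat) : {poly R} :=
  \prod_(j < k) ('X - (c + j%:R * b)%:P).

Definition stirling_spec (R : realType) (n : nat) (a b g : R) (c : nat -> R) : Prop :=
  gfpoly 0 a n = \sum_(k < n.+1) c k *: gfpoly g b k.

Definition gstirling (R : realType) (n k : nat) (a b g : R) : R :=
  epsilon (inhabits (fun _ : nat => (0 : R))) (stirling_spec n a b g) k.

(* binom(k+lam-1, k) = lam(lam+1)...(lam+k-1)/k! *)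
Definition risebin (R : realType) (lam k : nat) : R :=
  (\prod_(i < k) (lam + i)%:R) / (k`!)%:R.

Definition Apoly (R : realType) (n lam : nat) (x a b g : R) : R :=
  \sum_(k < n.+1) risebin R lam k * (-1) ^+ (n + k) * b ^+ k * (k`!)%:R
                  * gstirling n k a (- b) (- g) * x ^+ k.

(* Main.v *)
Require Import Defs.
From HB Require Import structures.
From mathcomp Require Import all_boot all_order all_algebra.
From mathcomp Require Import reals ring.
From Stdlib Require Import ClassicalEpsilon.
From Stdlib Require Import ClassicalEpsilon.
Set Implicit Arguments. Unset Strict Implicit. Unset Printing Implicit Defensive.
Import Order.TTheory GRing.Theory Num.Theory.
Local Open Scope ring_scope.

Fixpoint dd (R : realType) (B : R) (k : nat) (f : R -> R) (t : R) {struct k} : R :=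
  match k with 0 => f t | k'.+1 => dd B k' f (t + B) - dd B k' f t end.

Lemma dd_ext (R : realType) (B : R) k (f g : R -> R) :
  (forall t, f t = g t) -> forall t, dd B k f t = dd B k g t.
Proof. by move=> H; elim: k => [|k IH] t //=; rewrite !IH. Qed.

Lemma ddS' (R : realType) (B : R) k (f : R -> R) t :
  dd B k.+1 f t = dd B k (fun s => f (s + B) - f s) t.
Proof. by elim: k t => [|k IH] t //=; rewrite -!IH. Qed.

Lemma dd_sum (R : realType) (B : R) k m (c : nat -> R) (f : nat -> R -> R) t :
  dd B k (fun s => \sum_(j < m) c j * f j s) t = \sum_(j < m) c j * dd B k (f j) t.
Proof.
elim: k t => [|k IH] t //=; rewrite !IH -sumrB; apply: eq_bigr => j _.
by rewrite mulrBr.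
Qed.

Lemma dd_scale (R : realType) (B : R) k c (f : R -> R) t :
  dd B k (fun s => c * f s) t = c * dd B k f t.
Proof. by elim: k t => [|k IH] t //=; rewrite !IH mulrBr. Qed.

Lemma dd_0 (R : realType) (B : R) k t : dd B k (fun _ => 0) t = 0.
Proof. by elim: k t => [|k IH] t //=; rewrite !IH subrr. Qed.

Definition pv (R : realType) (G B : R) (j : nat) (t : R) : R :=
  \prod_(i < j) (t - (G + i%:R * B)).

Lemma horner_gf (R : realType) (G B : R) j t : (gfpoly G B j).[t] = pv G B j t.
Proof. by rewrite /gfpoly horner_prod; apply: eq_bigr => i _; rewrite hornerXsubC. Qed.

Lemma pvD (R : realType) (G B : R) j t :
  pv G B j.+1 (t + B) - pv G B j.+1 t = j.+1%:R * B * pv G B j t.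
Proof.
rewrite /pv big_ord_recl big_ord_recr /=.
rewrite (eq_bigr (fun i : 'I_j => t - (G + i%:R * B))); last first.
  by move=> i _; rewrite /bump /= add1n mulrS; ring.
rewrite mulrS; ring.
Qed.

Lemma pv_node (R : realType) (G B : R) j : pv G B j G = (j == 0%N)%:R.
Proof.
case: j => [|j]; first by rewrite /pv big_ord0.
by rewrite /pv big_ord_recl /= mul0r addr0 subrr mul0r.
Qed.


Lemma dd_pv (R : realType) (G B : R) k j :
  dd B k (pv G B j) G = if k == j then (k`!)%:R * B ^+ k else 0.
Proof.
elim: k j => [|k IH] j.
  by rewrite /= pv_node; case: j => [|j] //=; rewrite expr0 mulr1.
rewrite ddS'; case: j => [|j].
  rewrite (@dd_ext _ _ _ _ (fun _ => 0)) ?dd_0 // => s.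
  by rewrite /pv !big_ord0 subrr.
rewrite (@dd_ext _ _ _ _ (fun s => (j.+1%:R * B) * pv G B j s)); last by move=> s; rewrite pvD.
rewrite dd_scale IH eqSS; case: eqP => [->|]; last by rewrite mulr0.
by rewrite factS natrM exprS; ring.
Qed.

Lemma dd_expand (R : realType) (G B a : R) m (c : nat -> R) k :
  gfpoly 0 a m = \sum_(j < m.+1) c j *: gfpoly G B j ->
  dd B k (pv 0 a m) G = if (k < m.+1)%N then c k * ((k`!)%:R * B ^+ k) else 0.
Proof.
move=> H.
rewrite (@dd_ext _ _ _ _ (fun s => \sum_(j < m.+1) c j * pv G B j s)); last first.
  by move=> s; rewrite -horner_gf H horner_sum; apply: eq_bigr => j _; rewrite hornerZ horner_gf.
rewrite dd_sum.
rewrite (eq_bigr (fun j : 'I_m.+1 => if (j == k :> nat) then c j * ((j`!)%:R * B ^+ j) else 0)); last first.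
  by move=> j _; rewrite dd_pv eq_sym; case: eqP => [->|]; rewrite ?mulr0.
by rewrite -big_mkcond (big_ord1_eq _ (fun j => c j * ((j`!)%:R * B ^+ j)) k m.+1).
Qed.

Lemma size_gfpoly (R : realType) (G B : R) k : size (gfpoly G B k) = k.+1.
Proof. rewrite /gfpoly size_prod_XsubC; congr _.+1.
by rewrite -[X in _ = X]card_ord cardE /enum_mem filter_predT. Qed.

Lemma coef_gfpoly_top (R : realType) (G B : R) k : (gfpoly G B k)`_k = 1.
Proof.
have := monic_prod_XsubC (index_enum 'I_k) xpredT (fun j : 'I_k => G + j%:R * B).
move/monicP; rewrite lead_coefE -/(gfpoly G B k) size_gfpoly /=; exact.
Qed.

Lemma expand (R : realType) (G B : R) n (p : {poly R}) : (size p <= n.+1)%N ->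
  exists c : nat -> R, p = \sum_(k < n.+1) c k *: gfpoly G B k.
Proof.
elim: n p => [|n IH] p Hp.
  exists (fun _ => p`_0); rewrite big_ord1 /gfpoly big_ord0 alg_polyC.
  exact: size1_polyC.
set q := p - p`_n.+1 *: gfpoly G B n.+1.
have Hq : (size q <= n.+1)%N.
  apply/leq_sizeP => j Hj; rewrite /q coefB coefZ.
  case: (ltngtP j n.+1) => [|Hj2|<-]; first by rewrite ltnNge Hj.
    have Hg : (size (gfpoly G B n.+1) <= n.+2)%N by rewrite size_gfpoly.
    move/leq_sizeP: Hp => Hp; move/leq_sizeP: Hg => Hg.
    by rewrite (Hp j) // (Hg j) // mulr0 subr0.
  by rewrite coef_gfpoly_top mulr1 subrr.
have [c Hc] := IH q Hq.
exists (fun k => if k == n.+1 then p`_n.+1 else c k).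
rewrite big_ord_recr /= eqxx.
rewrite (eq_bigr (fun k : 'I_n.+1 => c k *: gfpoly G B k)); last first.
  by move=> [i Hi] _ /=; rewrite (ltn_eqF Hi).
by rewrite -Hc /q subrK.
Qed.

Lemma pvS (R : realType) (a t : R) n : pv 0 a n.+1 t = pv 0 a n t * (t - n%:R * a).
Proof. by rewrite /pv big_ord_recr /= add0r. Qed.

Lemma pv0 (R : realType) (a t : R) : pv 0 a 0 t = 1.
Proof. by rewrite /pv big_ord0. Qed.

Lemma vander (R : realType) (a u v : R) n :
  pv 0 a n (u + v) = \sum_(m < n.+1) ('C(n, m))%:R * pv 0 a m u * pv 0 a (n - m) v.
Proof.
elim: n u v => [|n IH] u v.
  by rewrite big_ord1 !pv0 bin0 !mulr1.
rewrite pvS IH mulr_suml.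
have HA : forall m : 'I_n.+1,
   ('C(n, m))%:R * pv 0 a m u * pv 0 a (n - m) v * (u + v - n%:R * a)
 = ('C(n, m))%:R * pv 0 a m.+1 u * pv 0 a (n - m) v
   + ('C(n, m))%:R * pv 0 a m u * pv 0 a (n - m).+1 v.
  move=> m; rewrite !pvS.
  have e : (n%:R : R) = (n - m)%:R + m%:R by rewrite -natrD subnK // -ltnS.
  rewrite e; ring.
rewrite (eq_bigr _ (fun m _ => HA m)) big_split /=.
rewrite [RHS]big_ord_recl /= bin0 subn0 pv0 !mul1r.
have E1 : \sum_(i < n.+1)
    'C(n.+1, bump 0 i)%:R * pv 0 a (bump 0 i) u * pv 0 a (n.+1 - bump 0 i) v
  = \sum_(m < n.+1) ('C(n, m.+1))%:R * pv 0 a m.+1 u * pv 0 a (n - m) v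
  + \sum_(m < n.+1) ('C(n, m))%:R * pv 0 a m.+1 u * pv 0 a (n - m) v.
  rewrite -big_split; apply: eq_bigr => m _.
  by rewrite /bump /= ?add1n binS natrD subSS !mulrDl.
have E2 : \sum_(m < n.+1) ('C(n, m.+1))%:R * pv 0 a m.+1 u * pv 0 a (n - m) v
  = \sum_(m < n) ('C(n, m.+1))%:R * pv 0 a m.+1 u * pv 0 a (n - m) v.
  by rewrite big_ord_recr /= bin_small // !mul0r addr0.
have E3 : \sum_(m < n.+1) ('C(n, m))%:R * pv 0 a m u * pv 0 a (n - m).+1 v
  = pv 0 a n.+1 v + \sum_(m < n) ('C(n, m.+1))%:R * pv 0 a m.+1 u * pv 0 a (n - m) v.
  rewrite big_ord_recl /= bin0 subn0 pv0 !mul1r; congr (_ + _).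
  by apply: eq_bigr => m _; rewrite /bump /= ?add1n subnSK.
rewrite E1 E2 E3; rewrite addrC addrA; congr (_ + _); rewrite addrC.

Qed.

Lemma dd_vanish (R : realType) (a B : R) m k t : (m < k)%N -> dd B k (pv 0 a m) t = 0.
Proof.
move=> Hk.
have [c Hc] := @expand R t B m (gfpoly 0 a m) (eq_leq (size_gfpoly 0 a m)).
by rewrite (dd_expand _ Hc) ltnS leqNgt Hk.
Qed.

Lemma stir_dd (R : realType) (a B G : R) m k : (k < m.+1)%N ->
  gstirling m k a B G * ((k`!)%:R * B ^+ k) = dd B k (pv 0 a m) G.
Proof.
move=> Hk; rewrite /gstirling.
set c := epsilon _ _.
have Hc : stirling_spec m a B G c.
  apply: epsilon_spec.
  exact: (@expand R G B m (gfpoly 0 a m) (eq_leq (size_gfpoly 0 a m))).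
by rewrite (dd_expand _ Hc) Hk.
Qed.

Lemma Apoly_dd (R : realType) m lam (x a b g : R) :
  Apoly m lam x a b g =
  (-1) ^+ m * \sum_(k < m.+1) risebin R lam k * x ^+ k * dd (- b) k (pv 0 a m) (- g).
Proof.
rewrite /Apoly mulr_sumr; apply: eq_bigr => k _.
rewrite -stir_dd // exprD (exprNn b); ring.
Qed.

Lemma ddK (R : realType) (a B : R) n k1 k2 u v :
  \sum_(m < n.+1) ('C(n, m))%:R * dd B k1 (pv 0 a m) u * dd B k2 (pv 0 a (n - m)) v
  = dd B (k1 + k2) (pv 0 a n) (u + v).
Proof.
elim: k1 u v => [|k1 IH1] u v.
  elim: k2 u v => [|k2 IH2] u v.
    by rewrite /= vander.
  rewrite add0n /=.
  rewrite (eq_bigr (fun m : 'I_n.+1 =>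
    ('C(n, m))%:R * dd B 0 (pv 0 a m) u * dd B k2 (pv 0 a (n - m)) (v + B)
  - ('C(n, m))%:R * dd B 0 (pv 0 a m) u * dd B k2 (pv 0 a (n - m)) v)); last first.
    by move=> m _; rewrite mulrBr.
  by rewrite sumrB !IH2 !add0n addrA.
rewrite addSn /=.
rewrite (eq_bigr (fun m : 'I_n.+1 =>
    ('C(n, m))%:R * dd B k1 (pv 0 a m) (u + B) * dd B k2 (pv 0 a (n - m)) v
  - ('C(n, m))%:R * dd B k1 (pv 0 a m) u * dd B k2 (pv 0 a (n - m)) v)); last first.
  by move=> m _; rewrite mulrBr mulrBl.
by rewrite sumrB !IH1 addrAC.
Qed.

Lemma rb0 (R : realType) lam : risebin R lam 0 = 1.
Proof. by rewrite /risebin big_ord0 divr1. Qed.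

Lemma rb_zero (R : realType) k : risebin R 0 k.+1 = 0.
Proof. by rewrite /risebin big_ord_recl /= mul0r mul0r. Qed.

Lemma fact_neq0 (R : realType) k : ((k`!)%:R : R) != 0.
Proof. by rewrite pnatr_eq0 -lt0n fact_gt0. Qed.

Lemma rb_pascal (R : realType) lam k :
  risebin R lam.+1 k.+1 = risebin R lam.+1 k + risebin R lam k.+1.
Proof.
rewrite /risebin [in LHS]big_ord_recr [in X in _ = _ + X]big_ord_recl /=.
have E : \prod_(i < k) ((lam + bump 0 i)%N%:R : R) = \prod_(i < k) ((lam.+1 + i)%N%:R : R).
  by apply: eq_bigr => i _; rewrite /bump /= add1n addnS.
rewrite E.
set A := \prod_(i < k) _.
rewrite factS natrM addn0 !natrD.
have H1 := fact_neq0 R k.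
have H2 : ((k.+1)%:R : R) != 0 by rewrite pnatr_eq0.
rewrite mulrS in H2 *.
field.
by rewrite H1 H2.
Qed.

Lemma rb_hockey (R : realType) lam k :
  risebin R lam.+1 k = \sum_(j < k.+1) risebin R lam j.
Proof.
elim: k => [|k IH]; first by rewrite big_ord1 !rb0.
by rewrite big_ord_recr /= -IH rb_pascal.
Qed.

Definition sser (R : realType) (N : nat) : {poly R} := \poly_(i < N) 1.

Lemma rb_coef (R : realType) N lam k : (k < N)%N -> ((sser R N) ^+ lam)`_k = risebin R lam k.
Proof.
elim: lam k => [|lam IH] k Hk.
  rewrite expr0 coef1; case: k Hk => [|k] _; first by rewrite rb0.
  by rewrite rb_zero.
rewrite exprSr coefM rb_hockey; apply: eq_bigr => j _.
have Hj : (j < N)%N by apply: leq_ltn_trans Hk; rewrite -ltnS.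
have Hkj : (k - j < N)%N by apply: leq_ltn_trans Hk; exact: leq_subr.
by rewrite IH // /sser coef_poly Hkj mulr1.
Qed.

Lemma rb_vander (R : realType) l1 l2 k :
  risebin R (l1 + l2) k = \sum_(j < k.+1) risebin R l1 j * risebin R l2 (k - j).
Proof.
rewrite -(@rb_coef R k.+1) // exprD coefM; apply: eq_bigr => j _.
rewrite !rb_coef //; apply: leq_ltn_trans (leq_subr _ _) _ => //.
Qed.

Definition Lf (R : realType) (N : nat) (H : nat -> R) (r : {poly R}) : R :=
  \sum_(k < N) r`_k * H k.

Lemma Lf_sum (R : realType) N H (I : finType) (F : I -> {poly R}) :
  Lf N H (\sum_(i : I) F i) = \sum_(i : I) Lf N H (F i).
Proof.
rewrite /Lf (eq_bigr (fun k : 'I_N => \sum_i (F i)`_k * H k)); last first.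
  by move=> k _; rewrite coef_sum mulr_suml.
by rewrite exchange_big.
Qed.

Lemma Lf_Z (R : realType) N H c (r : {poly R}) : Lf N H (c *: r) = c * Lf N H r.
Proof. by rewrite /Lf mulr_sumr; apply: eq_bigr => k _; rewrite coefZ mulrA. Qed.

Lemma Lf_X (R : realType) N (H : nat -> R) m :
  (forall k, (N <= k)%N -> H k = 0) -> Lf N H 'X^m = H m.
Proof.
move=> HH; rewrite /Lf.
rewrite (eq_bigr (fun k : 'I_N => if (k == m :> nat) then H k else 0)); last first.
  by move=> k _; rewrite coefXn; case: eqP => _; rewrite ?mul1r ?mul0r.
rewrite -big_mkcond (big_ord1_eq _ H m N).
by case: ltnP => // Hm; rewrite HH.
Qed.

Lemma conv (R : realType) N (f g H : nat -> R) :
  (forall k, (N <= k)%N -> H k = 0) ->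
  \sum_(i < N) \sum_(j < N) f i * g j * H (i + j)%N
  = \sum_(k < N) (\sum_(i < k.+1) f i * g (k - i)%N) * H k.
Proof.
move=> HH.
set p : {poly R} := \poly_(i < N) f i.
set q : {poly R} := \poly_(i < N) g i.
have -> : \sum_(k < N) (\sum_(i < k.+1) f i * g (k - i)%N) * H k = Lf N H (p * q).
  rewrite /Lf; apply: eq_bigr => k _; congr (_ * _).
  rewrite coefM; apply: eq_bigr => i _.
  have Hi : (i < N)%N by apply: leq_ltn_trans (ltn_ord k); rewrite -ltnS.
  have Hki : (k - i < N)%N by apply: leq_ltn_trans (ltn_ord k); exact: leq_subr.
  by rewrite /p /q !coef_poly Hi Hki.
have -> : p * q = \sum_(i < N) \sum_(j < N) (f i * g j) *: 'X^(i + j).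
  rewrite /p /q !poly_def mulr_suml; apply: eq_bigr => i _.
  rewrite mulr_sumr; apply: eq_bigr => j _.
  by rewrite -scalerAl -scalerAr exprD scalerA.
rewrite Lf_sum; apply: eq_bigr => i _.
rewrite Lf_sum; apply: eq_bigr => j _.
by rewrite Lf_Z Lf_X.
Qed.

Lemma widen_sum (R : realType) (F : nat -> R) m N : (m < N)%N ->
  (forall k, (m < k)%N -> F k = 0) ->
  \sum_(k < m.+1) F k = \sum_(k < N) F k.
Proof.
move=> Hm HF; rewrite (big_ord_widen _ _ Hm) big_mkcond; apply: eq_bigr => k _.
by case: ifP => // /negbT; rewrite -leqNgt => /HF ->.
Qed.

Unset Implicit Arguments.
Set Strict Implicit.
Theorem theorem10 (R : realType) (a b g1 g2 x : R) (l1 l2 n : nat) :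
  \sum_(k < n.+1) ('C(n, k))%:R * Apoly k l1 x a b (a + b + g1)
                                * Apoly (n - k) l2 x a b g2
  = Apoly n (l1 + l2) x a b (a + b + g1 + g2).
Proof.
set u := - (a + b + g1); set v := - g2.
have Huv : - (a + b + g1 + g2) = u + v by rewrite /u /v opprD.
set e := fun m k t => dd (- b) k (pv 0 a m) t.
have He : forall m k t, (m < k)%N -> e m k t = 0 by move=> m k t; exact: dd_vanish.
set r1 := risebin R l1; set r2 := risebin R l2.
have Step1 : forall m : 'I_n.+1,
  ('C(n, m))%:R * Apoly m l1 x a b (a + b + g1) * Apoly (n - m) l2 x a b g2
  = (-1) ^+ n * \sum_(k1 < n.+1) \sum_(k2 < n.+1)
      r1 k1 * r2 k2 * (x ^+ (k1 + k2) * (('C(n, m))%:R * e m k1 u * e (n - m)%N k2 v)).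
  move=> m; rewrite !Apoly_dd -/u -/v.
  have Hm : (m < n.+1)%N := ltn_ord m.
  have Hnm : (n - m < n.+1)%N by rewrite ltnS leq_subr.
  rewrite (@widen_sum R (fun k => risebin R l1 k * x ^+ k * dd (- b) k (pv 0 a m) u) m n.+1 Hm); last first.
    by move=> k Hk; rewrite dd_vanish // mulr0.
  rewrite (@widen_sum R (fun k => risebin R l2 k * x ^+ k * dd (- b) k (pv 0 a (n - m)) v) (n - m) n.+1 Hnm); last first.
    by move=> k Hk; rewrite dd_vanish // mulr0.
  have Hs : (-1) ^+ m * (-1) ^+ (n - m) = (-1) ^+ n :> R.
    by rewrite -exprD subnKC // -ltnS.
  set S1 := \sum_(k < n.+1) (risebin R l1 k * x ^+ k * dd (- b) k (pv 0 a m) u).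
  set S2 := \sum_(k < n.+1) (risebin R l2 k * x ^+ k * dd (- b) k (pv 0 a (n - m)) v).
  rewrite -Hs.
  transitivity ((-1) ^+ m * (-1) ^+ (n - m) * (('C(n, m))%:R * (S1 * S2))); first ring.
  congr (_ * _).
  rewrite /S1 /S2 mulr_suml mulr_sumr; apply: eq_bigr => k1 _.
  rewrite mulr_sumr mulr_sumr; apply: eq_bigr => k2 _.
  rewrite /e /r1 /r2 exprD; ring.
rewrite (eq_bigr _ (fun m _ => Step1 m)) -mulr_sumr.
rewrite exchange_big /=.
rewrite (eq_bigr (fun k1 : 'I_n.+1 => \sum_(k2 < n.+1)
   r1 k1 * r2 k2 * (x ^+ (k1 + k2) * e n (k1 + k2)%N (u + v)))); last first.
  move=> k1 _; rewrite exchange_big /=; apply: eq_bigr => k2 _.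
  by rewrite -!mulr_sumr /e ddK.
rewrite (@conv R n.+1 r1 r2 (fun k => x ^+ k * e n k (u + v))); last first.
  by move=> k Hk; rewrite He ?mulr0.
rewrite Apoly_dd Huv; congr (_ * _); apply: eq_bigr => k _.
by rewrite rb_vander mulrA.
Qed.
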